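(* Let $f\in\mathbf Q[X]$ be a separable polynomial of degree $2n$. (i) If $f$ is reciprocal, i.e. $f(X)=X^{2n}f(X^{-1})$, then the discriminant of $f$ is a square in $\mathbf Q$ if and only if $(-1)^nf(1)f(-1)$ is a square in $\mathbf Q$. (ii) If $f$ is skew-reciprocal, i.e. $f(X)=(-1)^{2n(2n-1)/2}X^{2n}f(-X^{-1})$, then the discriminant of $f$ is a square in $\mathbf Q$ if and only if $f(\mathrm i)f(-\mathrm i)$ (which is rational) is a square in $\mathbf Q$, where $\mathrm i\in\mathbf C$ is the imaginary unit. *)

(* Defs.v *)
From HB Require Import structures.
From mathcomp Require Import all_boot all_order all_algebra all_field.
Set Implicit Arguments. Unset Strict Implicit. Unset Printing Implicit Defensive.
Import Order.TTheory GRing.Theory Num.Theory.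
Local Open Scope ring_scope.

Definition polyC_of (f : {poly rat}) : {poly algC} := map_poly ratr f.

Definition roots_of (f : {poly rat}) : seq algC :=
  sval (closed_field_poly_normal (polyC_of f)).

Definition discriminant (f : {poly rat}) : algC :=
  let r := roots_of f in
  let d := (size f).-1 in
  (ratr (lead_coef f)) ^+ (2 * d - 2) *
  \prod_(i < size r) \prod_(j < size r | (i < j)%N) (r`_i - r`_j) ^+ 2.

Definition is_rat_square (x : algC) : Prop := exists q : rat, x = ratr (q ^+ 2).

Definition reciprocal (n : nat) (f : {poly rat}) : Prop :=
  forall x : rat, x != 0 -> f.[x] = x ^+ (2 * n) * f.[x^-1].

Definition skew_reciprocal (n : nat) (f : {poly rat}) : Prop :=
  forall x : rat, x != 0 ->
    f.[x] = (-1) ^+ (((2 * n) * (2 * n - 1)) %/ 2) * x ^+ (2 * n) * f.[- x^-1].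

(* Main.v *)
Require Import Defs.
From HB Require Import structures.
From mathcomp Require Import all_boot all_order all_algebra all_field.
From mathcomp Require Import ring.
From mathcomp Require Import zify.
Set Implicit Arguments. Unset Strict Implicit. Unset Printing Implicit Defensive.
Import Order.TTheory GRing.Theory Num.Theory.
Local Open Scope ring_scope.


Lemma aut_nonrat (x : algC) : x \notin Crat ->
  exists nu : {rmorphism algC -> algC}, nu x != x.
Proof.
move=> xQ.
have [p0 [Dp mon] _] := minCpolyP x.
have [r Dr] := closed_field_poly_normal (map_poly ratr p0 : {poly algC}).
rewrite lead_coef_map (monicP mon) rmorph1 scale1r in Dr.
have rx : x \in r by rewrite -root_prod_XsubC -Dr -Dp root_minCpoly.
have [Qs [QsC [rr Drr genQs]]] := num_field_exists r.
have [xx _ Dxx] : exists2 xx, xx \in rr & QsC xx = x.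
  by move: rx; rewrite -Drr => /mapP[xx xxr ->]; exists xx.
pose p := map_poly (in_alg Qs) p0.
have Sinj : map_poly QsC p = map_poly ratr p0.
  rewrite -map_poly_comp; apply: eq_map_poly => a.
  by rewrite /= rmorphZ_num rmorph1 mulr1.
have Dp' : p = \prod_(z <- rr) ('X - z%:P).
  apply: (map_poly_inj QsC); rewrite Sinj Dr -Drr big_map rmorph_prod /=.
  by apply: eq_bigr => z _; rewrite /= map_polyXsubC.
have pOver : p \is a polyOver 1%VS by apply/polyOver1P; exists p0.
have rootp : root p xx.
  by rewrite -(fmorph_root QsC) Sinj Dxx -Dp root_minCpoly.
have mdvd := minPoly_dvdp pOver rootp.
rewrite Dp' in mdvd; have [m Dm] := dvdp_prod_XsubC mdvd.
set ms := mask m rr in Dm.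
have {}Dm : minPoly 1 xx = \prod_(z <- ms) ('X - z%:P).
  by apply/eqP; rewrite -eqp_monic ?monic_minPoly ?monic_prod_XsubC.
have ums : uniq ms.
  rewrite -separable_prod_XsubC -Dm.
  apply: pcharf0_separable => a; rewrite (pchar_lalg Qs) pchar_num //.
have xms : xx \in ms by rewrite -root_prod_XsubC -Dm root_minPoly.
have [/hasP[yy yms yx] | /hasPn allx] := boolP (has (fun z => z != xx) ms);
    last first.
  exfalso; move/negP: xQ; apply.
  have sz1 : size ms = 1%N.
    apply/eqP; rewrite eqn_leq; apply/andP; split; last by move: xms; case: (ms).
    have sub : {subset ms <= [:: xx]}.
      by move=> z zms; rewrite inE; have := allx z zms; rewrite negbK.
    exact: (uniq_leq_size ums sub).
  have : adjoin_degree 1 xx == 1%N.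
    by rewrite -eqSS -size_minPoly Dm size_prod_XsubC sz1.
  rewrite adjoin_deg_eq1 => /vlineP[a Da].
  by rewrite -Dxx Da alg_num_field fmorph_rat Crat_rat.
have rootyy : root (map_poly \1%VF (minPoly 1 xx)) yy.
  have -> : map_poly \1%VF (minPoly 1 xx) = minPoly 1 xx.
    by apply: map_poly_id => z _; rewrite id_lfunE.
  by rewrite Dm root_prod_XsubC.
have hom0 := @kHomExtendP _ _ 1%AS 1%AS \1%VF xx yy (subvv _) (kHom1 _ _) rootyy.
have split1 : splittingFieldFor 1%AS p fullv.
  by exists rr; rewrite // Dp' eqpxx.
have split2 : splittingFieldFor <<1%AS; xx>>%AS p {:Qs}%AS.
  apply: splittingFieldForS split1; [exact: subv_adjoin | exact: subvf].
have [g homg Dg] := kHom_extends (subv_adjoin 1%AS xx) hom0 pOver split2.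
have gxx : g xx = yy.
  by rewrite -Dg ?memv_adjoin // (kHomExtend_val (kHom1 1%AS 1%AS)).

pose gmM := GRing.isMonoidMorphism.Build _ _ (fun_of_lfun g)
  (elimT kHom_monoid_morphism homg).
pose gR : {lrmorphism _ -> _} := HB.pack (fun_of_lfun g) gmM.
have [nu Dnu] := extend_algC_subfield_aut QsC gR.
exists nu; rewrite -Dxx -Dnu /= gxx.
by rewrite (inj_eq (fmorph_inj QsC)).
Qed.


Fixpoint Vr (s : seq algC) : algC :=
  if s is a :: s' then (\prod_(y <- s') (a - y) ^+ 2) * Vr s' else 1.

Lemma V_eq (s : seq algC) :
  \prod_(i < size s) \prod_(j < size s | (i < j)%N) (s`_i - s`_j) ^+ 2 = Vr s.
Proof.
elim: s => [|a s IH] /=; first by rewrite big_ord0.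
rewrite big_ord_recl -IH; congr (_ * _).
  rewrite big_mkcond big_ord_recl /= mul1r (big_nth 0) big_mkord.
  by apply: eq_bigr => j _.
apply: eq_bigr => i _; rewrite big_mkcond big_ord_recl /= mul1r [RHS]big_mkcond.
by apply: eq_bigr => j _.
Qed.

Lemma Vr_cat_cons (t1 t2 : seq algC) a :
  Vr (t1 ++ a :: t2) = (\prod_(y <- t1 ++ t2) (a - y) ^+ 2) * Vr (t1 ++ t2).
Proof.
elim: t1 => [|b t1 IH] //=.
rewrite IH !big_cons !big_cat /= big_cons.
have -> : (b - a) ^+ 2 = (a - b) ^+ 2 by rewrite -sqrrN opprB.
ring.
Qed.

Lemma Vr_perm (s t : seq algC) : perm_eq s t -> Vr s = Vr t.
Proof.
elim: s t => [|a s IH] t pst.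
  by rewrite perm_sym in pst; move/perm_nilP: pst => ->.
have ta : a \in t by rewrite -(perm_mem pst) mem_head.
move: pst; case/splitPr: ta => t1 t2 pst.
have pst' : perm_eq s (t1 ++ t2).
  by rewrite -(perm_cons a); apply: (perm_trans pst); rewrite -cat1s perm_catCA.
by rewrite Vr_cat_cons /= (IH _ pst') (perm_big _ pst').
Qed.

Lemma Vr_map (nu : {rmorphism algC -> algC}) s : nu (Vr s) = Vr (map nu s).
Proof.
elim: s => [|a s IH] /=; first by rewrite rmorph1.
rewrite rmorphM IH rmorph_prod big_map; congr (_ * _).
by apply: eq_bigr => y _; rewrite rmorphXn rmorphB.
Qed.

Definition flat (e : algC) (A : seq algC) := flatten [seq [:: a; e / a] | a <- A].

Fixpoint pairup (e : algC) (k : nat) (s : seq algC) : seq algC :=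
  if k is k'.+1 then
    (if s is a :: s' then a :: pairup e k' (rem (e / a) s') else [::])
  else [::].

Lemma invol (e x : algC) : e ^+ 2 = 1 -> x != 0 -> e / (e / x) = x.
Proof.
move=> e2 x0; have e0 : e != 0 by apply/eqP => e0; move: e2; rewrite e0 expr0n => /eqP; rewrite eq_sym oner_eq0.
by rewrite invf_div mulrA mulrC mulrA mulVf // mul1r.
Qed.

Lemma pairupP e k s : e ^+ 2 = 1 -> size s = (2 * k)%N -> uniq s ->
  (forall x, x \in s -> [/\ x != 0, e / x \in s & e / x != x]) ->
  perm_eq s (flat e (pairup e k s)) /\ size (pairup e k s) = k.
Proof.
move=> e2; elim: k s => [|k IH] [|a s'] //=.
move=> sz /andP[as' us'] cl.
have [a0 ya ya'] := cl a (mem_head _ _).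
set y := e / a in ya ya' *.
have ys' : y \in s' by move: ya; rewrite inE (negPf ya').
set s'' := rem y s'.
have sz'' : size s'' = (2 * k)%N.
  by move: sz; rewrite size_rem // mulnS => -[->].
have us'' : uniq s'' by apply: rem_uniq.
have cl'' : forall x, x \in s'' -> [/\ x != 0, e / x \in s'' & e / x != x].
  move=> x; rewrite mem_rem_uniq // inE => /andP[xy xs'].
  have xs : x \in a :: s' by rewrite inE xs' orbT.
  have [x0 ex ex'] := cl x xs; split => //.
  have xa : x != a by apply: contraNneq as' => <-.
  rewrite mem_rem_uniq // inE; apply/andP; split.
    apply: contra xa => /eqP Hy; apply/eqP.
    by rewrite -(invol e2 x0) Hy invol.
  move: ex; rewrite inE => /orP[/eqP Hx|//].
  by move: xy; rewrite /y -Hx invol // eqxx.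
have [IHp IHs] := IH s'' sz'' us'' cl''.
split; last by rewrite IHs.
rewrite /flat /= -/(flat e _) perm_cons.
apply: (perm_trans (perm_to_rem ys')); rewrite perm_cons; exact: IHp.
Qed.
Lemma pair_id (e a a' : algC) : (e = 1 \/ e = -1) -> a != 0 -> a' != 0 ->
  ((a - a') * (e/a - a'))^+2 * ((a - e/a') * (e/a - e/a'))^+2 =
  ((a + e/a) - (a' + e/a'))^+4.
Proof. by move=> [->|->] a0 a'0; field; rewrite ?a0 ?a'0. Qed.

Lemma sq_id (e a : algC) : (e = 1 \/ e = -1) -> a != 0 ->
  (a - e / a) ^+ 2 = (a + e / a) ^+ 2 - 4 * e.
Proof. by move=> [->|->] a0; field; rewrite ?a0. Qed.

Lemma ev_id (e a z : algC) : (e = 1 \/ e = -1) -> z ^+ 2 = e -> a != 0 ->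
  ((z - a) * (z - e / a)) * ((- z - a) * (- z - e / a)) =
  - e * ((a + e / a) ^+ 2 - 4 * e).
Proof.
move=> he z2 a0.
have -> : ((z - a) * (z - e / a)) * ((- z - a) * (- z - e / a)) =
  (z ^+ 2 + e) ^+ 2 - (a + e / a) ^+ 2 * z ^+ 2.
  by field; rewrite ?a0.
by rewrite z2; case: he => ->; ring.
Qed.

Definition bb (e a : algC) := a + e / a.

Lemma big_flat (F : algC -> algC) e A :
  \prod_(y <- flat e A) F y = \prod_(a <- A) (F a * F (e / a)).
Proof.
elim: A => [|a A IH]; first by rewrite !big_nil.
by rewrite /flat /= -/(flat e A) !big_cons IH mulrA.
Qed.

Lemma Vr_flat e A : (e = 1 \/ e = -1) -> all (fun a => a != 0) A ->
  Vr (flat e A) = \prod_(a <- A) ((bb e a) ^+ 2 - 4 * e) * Vr (map (bb e) A) ^+ 2.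
Proof.
move=> he; elim: A => [|a A IH] /=; first by rewrite big_nil mul1r expr1n.
move=> /andP[a0 A0].
rewrite /flat /= -/(flat e A) big_cons IH // big_cons.
have cross : \prod_(y <- flat e A) (a - y) ^+ 2 * \prod_(y <- flat e A) (e / a - y) ^+ 2
    = (\prod_(c <- map (bb e) A) (bb e a - c) ^+ 2) ^+ 2.
  rewrite -big_split /= big_flat -prodrXl big_map; apply: eq_big_seq => a' a'A /=.
  have a'0 : a' != 0 by move/allP: A0 => /(_ a' a'A).
  rewrite -!exprMn -exprM /bb -(pair_id he a0 a'0).
  ring.
rewrite (sq_id he a0) -/(bb e a).
move: cross; set P1 := \prod_(y <- _) _; set P2 := \prod_(y <- _) _.
move=> cross.
by rewrite exprMn -cross; ring.
Qed.

Lemma eval_flat e A z : (e = 1 \/ e = -1) -> z ^+ 2 = e -> all (fun a => a != 0) A ->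
  \prod_(y <- flat e A) (z - y) * \prod_(y <- flat e A) (- z - y) =
  (- e) ^+ size A * \prod_(a <- A) ((bb e a) ^+ 2 - 4 * e).
Proof.
move=> he z2; elim: A => [|a A IH] /=; first by rewrite !big_nil mulr1.
move=> /andP[a0 A0].
have H := ev_id he z2 a0; rewrite -/(bb e a) in H.
rewrite /flat /= -/(flat e A) !big_cons.
set Pf := \prod_(y <- flat e A) (z - y); set Pg := \prod_(y <- flat e A) (- z - y).
transitivity (((z - a) * (z - e / a) * ((- z - a) * (- z - e / a))) * (Pf * Pg)).
  ring.
rewrite H IH // [(- e) ^+ (size A).+1]exprS; ring.
Qed.

Lemma count_flat e A (P : pred algC) : e ^+ 2 = 1 -> all (fun a => a != 0) A ->
  count P (map (bb e) (flat e A)) = (2 * count P (map (bb e) A))%N.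
Proof.
move=> e2; elim: A => [|a A IH] //= /andP[a0 A0].
rewrite /flat /= -/(flat e A) IH //.
have -> : bb e (e / a) = bb e a by rewrite /bb invol // addrC.
by rewrite !mul2n doubleD addnA addnn.
Qed.

Lemma Vr_pairs_perm e A A' : e ^+ 2 = 1 ->
  all (fun a => a != 0) A -> all (fun a => a != 0) A' ->
  perm_eq (flat e A) (flat e A') ->
  Vr (map (bb e) A) = Vr (map (bb e) A').
Proof.
move=> e2 A0 A'0 pAA; apply: Vr_perm; apply/permP => P.
have /permP/(_ P) := perm_map (bb e) pAA.
by rewrite !count_flat // => /eqP; rewrite eqn_pmul2l // => /eqP.
Qed.


Lemma sum_rev (g : nat -> algC) m :
  \sum_(i < m.+1) g i = \sum_(i < m.+1) g (m - i)%N.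
Proof.
rewrite (reindex_inj rev_ord_inj); apply: eq_bigr => i _.
by rewrite /= subSS.
Qed.

Lemma eE (E : algC) i : E ^+ 2 = 1 -> E ^+ i * E ^+ i = 1.
Proof. by move=> E2; rewrite -exprMn -expr2 E2 expr1n. Qed.

Section Refl.
Variables (F : {poly algC}) (n : nat) (E : algC).
Hypothesis E2 : E ^+ 2 = 1.
Hypothesis Fsz : (size F <= (2 * n).+1)%N.
Hypothesis Hc : forall k, (k <= 2 * n)%N -> F`_k = E ^+ (n + k) * F`_(2 * n - k).

Lemma refl_eval x : x != 0 -> x ^+ (2 * n) * F.[E / x] = E ^+ n * F.[x].
Proof.
move=> x0; rewrite !(horner_coef_wide _ Fsz) mulr_sumr mulr_sumr.
rewrite [in RHS](sum_rev (fun i => E ^+ n * (F`_i * x ^+ i))).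
apply: eq_bigr => i _.
have ile : (i <= 2 * n)%N by rewrite -ltnS.
rewrite (Hc ile).
have -> : x ^+ (2 * n) = x ^+ (2 * n - i) * x ^+ i by rewrite -exprD subnK.
have xi0 : x ^+ i != 0 by rewrite expf_neq0.
rewrite exprD expr_div_n.
transitivity ((E ^+ n * (F`_(2 * n - i) * x ^+ (2 * n - i))) *
   ((E ^+ i * E ^+ i) * (x ^+ i / x ^+ i))); first by ring.
by rewrite eE // divff // !mulr1.
Qed.

Lemma refl_deriv x : x ^+ 2 = E -> root F x -> F^`().[x] = 0.
Proof.
move=> x2 /rootP Fx.
have x0 : x != 0.
  apply/eqP => x0; move: E2; rewrite -x2 x0 expr0n /= expr0n => /eqP.
  by rewrite eq_sym oner_eq0.
have coefD k : (F^`() * 'X)`_k = F`_k *+ k.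
  by rewrite coefMX coef_deriv; case: k => [|k] //=; rewrite mulr0n.
have szX : (size (F^`() * 'X)%R <= (2 * n).+1)%N.
  apply/leq_sizeP => j hj; rewrite coefD.
  by move/leq_sizeP: Fsz => ->; rewrite ?mul0rn.
set S := \sum_(i < (2 * n).+1) F`_i *+ i * x ^+ i.
have hS : F^`().[x] * x = S.
  rewrite -hornerMX (horner_coef_wide _ szX); apply: eq_bigr => i _.
  by rewrite coefD.
have hS2 : S = \sum_(i < (2 * n).+1) F`_i *+ (2 * n - i) * x ^+ i.
  rewrite /S (sum_rev (fun i => F`_i *+ i * x ^+ i)); apply: eq_bigr => i _.
  have ile : (i <= 2 * n)%N by rewrite -ltnS.
  set m := (2 * n - i)%N.
  have key : E ^+ (n + m) * x ^+ m = x ^+ i.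
    apply: (mulIf (expf_neq0 m x0)) => /=.
    rewrite -mulrA -exprMn -expr2 x2 exprD -mulrA eE // mulr1.
    by rewrite -exprD subnKC // exprM x2.
  rewrite (Hc (leq_subr i (2 * n))) -/m subKn //.
  by rewrite -key mulrnAl; ring.
have : S *+ 2 = 0.
  rewrite mulr2n {1}hS2 /S -big_split /=.
  transitivity ((\sum_(i < (2 * n).+1) F`_i * x ^+ i) *+ (2 * n)).
    rewrite -sumrMnl; apply: eq_bigr => i _.
    have ile : (i <= 2 * n)%N by rewrite -ltnS.
    by rewrite -mulrDl -mulrnDr subnK // mulrnAl.
  by rewrite -(horner_coef_wide _ Fsz) Fx mul0rn.
move/eqP; rewrite mulrn_eq0 /= -hS mulf_eq0 (negPf x0) orbF.
by move/eqP.
Qed.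
End Refl.

Lemma mem_flat e A a : a \in A -> a \in flat e A.
Proof.
elim: A => [|b A IH] //; rewrite inE => /orP[/eqP->|aA].
  by rewrite /flat /= mem_head.
by rewrite /flat /= -/(flat e A) !inE IH ?orbT.
Qed.

Lemma map_flat (nu : {rmorphism algC -> algC}) (e : algC) A : nu e = e ->
  map nu (flat e A) = flat e (map nu A).
Proof.
move=> nue; elim: A => [|a A IH] //=.
by rewrite /flat /= -!/(flat e _) IH fmorph_div nue.
Qed.

Lemma Vr_neq0 s : uniq s -> Vr s != 0.
Proof.
elim: s => [|a s IH] /=; first by rewrite oner_eq0.
move=> /andP[aS us]; rewrite mulf_neq0 ?IH // prodf_seq_neq0.
apply/allP => y ys /=; rewrite expf_neq0 // subr_eq0.
by apply: contraNneq aS => ->.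
Qed.

Lemma roots_nu (f : {poly rat}) (nu : {rmorphism algC -> algC}) :
  f != 0 -> perm_eq (map nu (roots_of f)) (roots_of f).
Proof.
move=> f0.
have c0 : ratr (lead_coef f) != 0 :> algC by rewrite fmorph_eq0 lead_coef_eq0.
have Ff := svalP (closed_field_poly_normal (polyC_of f)).
rewrite -/(roots_of f) /polyC_of lead_coef_map in Ff.
apply: prod_XsubC_eq; apply: (scalerI c0).
have := congr1 (map_poly nu) Ff.
rewrite map_polyZ fmorph_rat -map_poly_comp (eq_map_poly (fmorph_rat nu)).
rewrite rmorph_prod big_map => H.
rewrite -Ff /polyC_of H; congr (_ *: _).
by apply: eq_bigr => x _; rewrite /= map_polyXsubC.
Qed.

Lemma main_gen (f : {poly rat}) (n : nat) (e : rat) (z : algC) :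
  (e = 1 \/ e = -1) -> z ^+ 2 = ratr e -> separable_poly f -> size f = (2 * n).+1 ->
  (forall k, (k <= 2 * n)%N -> f`_k = e ^+ (n + k) * f`_(2 * n - k)) ->
  (is_rat_square (discriminant f) <->
   is_rat_square ((- ratr e) ^+ n * ((polyC_of f).[z] * (polyC_of f).[- z]))).
Proof.
move=> he z2 sepf szf Hc.
set E : algC := ratr e.
have hE : E = 1 \/ E = -1.
  by rewrite /E; case: he => ->; [left; rewrite rmorph1 | right; rewrite rmorphN1].
have E2 : E ^+ 2 = 1 by case: hE => ->; rewrite ?sqrrN expr1n.
set F := polyC_of f.
set c : algC := ratr (lead_coef f).
have f0 : f != 0 by rewrite -size_poly_gt0 szf.
have c0 : c != 0 by rewrite fmorph_eq0 lead_coef_eq0.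
have Ff := svalP (closed_field_poly_normal F).
rewrite -/(roots_of f) /F /polyC_of lead_coef_map -/c -/(polyC_of f) -/F in Ff.
set s := roots_of f in Ff.
have Fsz : size F = (2 * n).+1 by rewrite size_map_poly.
have Fsz' : (size F <= (2 * n).+1)%N by rewrite Fsz.
have ssz : size s = (2 * n)%N.
  by have := Fsz; rewrite Ff size_scale // size_prod_XsubC => -[].
have us : uniq s.
  have : separable_poly F by rewrite separable_map.
  by rewrite Ff (eqp_separable (eqp_scale _ c0)) separable_prod_XsubC.
have HcF k : (k <= 2 * n)%N -> F`_k = E ^+ (n + k) * F`_(2 * n - k).
  by move=> kle; rewrite !coef_map /= Hc // rmorphM rmorphXn.
have rootF x : root F x = (x \in s) by rewrite Ff rootZ // root_prod_XsubC.
have F0 : F.[0] != 0.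
  rewrite horner_coef0 HcF // subn0; apply: mulf_neq0.
    by rewrite expf_neq0 //; case: hE => ->; rewrite ?oppr_eq0 oner_eq0.
  have -> : (2 * n)%N = (size F).-1 by rewrite Fsz.
  by rewrite -lead_coefE lead_coef_map.
have cl x : x \in s -> [/\ x != 0, E / x \in s & E / x != x].
  move=> xs; have /rootP Fx : root F x by rewrite rootF.
  have x0 : x != 0 by apply/eqP => x0; move: F0; rewrite -{1}x0 Fx eqxx.
  split => //.
    rewrite -rootF; apply/rootP.
    have := refl_eval E2 Fsz' HcF x0; rewrite Fx mulr0 => /eqP.
    by rewrite mulf_eq0 expf_eq0 (negPf x0) andbF /= => /eqP.
  apply/eqP => hx.
  have x2 : x ^+ 2 = E by rewrite expr2 -{2}hx mulrCA mulfV // mulr1.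
  have sepF : separable_poly F by rewrite separable_map.
  move: sepF; rewrite unlock => sepF.
  have rx : root F x by rewrite rootF.
  have := coprimep_root sepF rx.
  by rewrite (refl_deriv E2 Fsz' HcF x2 rx) eqxx.
have [pA szA] := pairupP E2 ssz us cl.
set A := pairup E n s in pA szA.
have A0 : all (fun a => a != 0) A.
  apply/allP => a aA; have : a \in s by rewrite (perm_mem pA) mem_flat.
  by case/cl.
have disc_eq : discriminant f = c ^+ (2 * (2 * n) - 2) * Vr s.
  by rewrite /discriminant -/s V_eq szf.
set P := \prod_(a <- A) (bb E a ^+ 2 - 4 * E).
set W := Vr (map (bb E) A).
have Vs : Vr s = P * W ^+ 2 by rewrite (Vr_perm pA) Vr_flat.
have Keq : (- E) ^+ n * (F.[z] * F.[- z]) = c ^+ 2 * P.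
  rewrite Ff !hornerZ !horner_prod.
  under eq_bigr do rewrite hornerXsubC.
  under [X in _ * (_ * X)]eq_bigr do rewrite hornerXsubC.
  rewrite !(perm_big _ pA) /=.
  transitivity (c ^+ 2 * ((- E) ^+ n * (\prod_(i <- flat E A) (z - i) *
                 \prod_(i <- flat E A) (- z - i)))); first by ring.
  rewrite (eval_flat hE) ?z2 // szA mulrA -exprMn -expr2 sqrrN E2 expr1n mul1r.
  by [].
have WQ : W \in Crat.
  apply: contraT => /aut_nonrat [nu] /negP H; exfalso; apply: H; apply/eqP.
  rewrite /W Vr_map -map_comp.
  have nuE : nu E = E by rewrite /E fmorph_rat.
  rewrite (eq_map (_ : nu \o bb E =1 bb E \o nu)); last first.
    by move=> a; rewrite /= /bb rmorphD fmorph_div nuE.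
  rewrite map_comp; apply: Vr_pairs_perm => //.
    by rewrite all_map; apply: sub_all A0 => a /=; rewrite fmorph_eq0.
  rewrite -map_flat //.
  have H1 : perm_eq (map nu (flat E A)) (map nu s) by apply: perm_map; rewrite perm_sym.
  have H2 := roots_nu nu f0.
  by apply: (perm_trans H1); apply: (perm_trans H2).
have cexp : c ^+ (2 * (2 * n) - 2) = c ^+ 2 * (c ^+ (2 * n - 1) / c) ^+ 2.
  case: (n) => [|m].
    by rewrite muln0 sub0n expr0 div1r exprVn mulfV // expf_neq0.
  have -> : (2 * (2 * m.+1) - 2 = (2 * m + 2 * m) + 2)%N.
    by lia.
  have -> : (2 * m.+1 - 1 = (2 * m).+1)%N by lia.
  rewrite [c ^+ (2 * m).+1]exprSr mulfK // !exprD; ring.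
set G := c ^+ (2 * n - 1) / c * W.
have DKG : discriminant f = (- E) ^+ n * (F.[z] * F.[- z]) * G ^+ 2.
  by rewrite disc_eq Vs Keq cexp /G; ring.
have D0 : discriminant f != 0.
  by rewrite disc_eq mulf_neq0 ?expf_neq0 ?Vr_neq0.
have GQ : G \in Crat.
  have [w Dw] := CratP _ WQ; apply/CratP.
  exists (lead_coef f ^+ (2 * n - 1) / lead_coef f * w).
  by rewrite /G Dw rmorphM fmorph_div rmorphXn.
have G0 : G != 0 by apply: contraNneq D0 => G0; rewrite DKG G0 expr0n mulr0.
move: DKG; set K := (- E) ^+ n * _ => DKG.
have [g Dg] := CratP _ GQ.
rewrite /is_rat_square DKG; split => -[q Dq].
  exists (q / g).
  have g0 : g != 0 by apply: contraNneq G0 => g0; rewrite Dg g0 rmorph0.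
  apply: (mulIf (expf_neq0 2 G0)); rewrite /= Dq Dg -rmorphXn -rmorphM.
  by congr ratr; field.
by exists (q * g); rewrite Dq Dg -rmorphXn -rmorphM exprMn.
Qed.


Lemma sum_rev_rat (g : nat -> rat) m :
  \sum_(i < m.+1) g i = \sum_(i < m.+1) g (m - i)%N.
Proof.
rewrite (reindex_inj rev_ord_inj); apply: eq_bigr => i _.
by rewrite /= subSS.
Qed.

Lemma coef_from_eval (f : {poly rat}) n (e : rat) : (e = 1 \/ e = -1) ->
  size f = (2 * n).+1 ->
  (forall x : rat, x != 0 -> f.[x] = e ^+ n * x ^+ (2 * n) * f.[e / x]) ->
  forall k, (k <= 2 * n)%N -> f`_k = e ^+ (n + k) * f`_(2 * n - k).
Proof.
move=> he szf H.
have e2 k : e ^+ k * e ^+ k = 1.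
  by rewrite -exprMn; case: he => ->; rewrite ?mulrNN mulr1 expr1n.
set T := \poly_(i < (2 * n).+1) (e ^+ (n + i) * f`_(2 * n - i)).
have fszl : (size f <= (2 * n).+1)%N by rewrite szf.
have Tx x : x != 0 -> T.[x] = e ^+ n * x ^+ (2 * n) * f.[e / x].
  move=> x0; rewrite horner_poly (horner_coef_wide _ fszl) mulr_sumr.
  rewrite (sum_rev_rat (fun i => e ^+ n * x ^+ (2 * n) * (f`_i * (e / x) ^+ i))).
  apply: eq_bigr => i _.
  have ile : (i <= 2 * n)%N by rewrite -ltnS.
  have xi0 : x ^+ (2 * n - i) != 0 by rewrite expf_neq0.
  have -> : x ^+ (2 * n) = x ^+ i * x ^+ (2 * n - i) by rewrite -exprD subnKC.
  have -> : e ^+ (n + i) = e ^+ n * e ^+ (2 * n - i).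
    rewrite exprD; congr (_ * _).
    apply: (mulIf (_ : e ^+ i != 0)); first by rewrite expf_neq0 //; case: he => ->.
    by rewrite e2 -exprD subnK // exprM (_ : e ^+ 2 = 1) ?expr1n // -(e2 1%N) expr1.
  rewrite expr_div_n.
  transitivity (e ^+ n * (f`_(2 * n - i) * x ^+ i) * ((e ^+ (2 * n - i)) * (x ^+ (2 * n - i) / x ^+ (2 * n - i)))); last by ring.
  by rewrite divff // mulr1; ring.
have fT : f = T.
  apply/eqP; rewrite -subr_eq0; apply/negPn/negP => q0.
  set rs := [seq (i.+1)%:R | i <- iota 0 (2 * n).+1] : seq rat.
  have ur : uniq rs.
    rewrite map_inj_uniq ?iota_uniq // => a b /eqP.
    by rewrite eqr_nat eqSS => /eqP.
  have ar : all (root (f - T)) rs.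
    apply/allP => _ /mapP[i _ ->]; rewrite /root hornerD hornerN Tx ?pnatr_eq0 //.
    by rewrite -H ?pnatr_eq0 // subrr.
  have := max_poly_roots q0 ar ur; rewrite size_map size_iota ltnNge.
  apply/negP/negPn; apply: (leq_trans (size_add _ _)); rewrite geq_max fszl size_opp.
  exact: size_poly.
move=> k kle; rewrite {1}fT coef_poly ltnS kle //.
Qed.

Lemma rat_sq_ratr (r : rat) : is_rat_square (ratr r) <-> exists q : rat, r = q ^+ 2.
Proof.
split => -[q Dq]; exists q; last by rewrite Dq.
exact: (fmorph_inj (ratr : {rmorphism rat -> algC})).
Qed.

Unset Implicit Arguments.

Theorem lemma2p2 (n : nat) (f : {poly rat}) :
  separable_poly f -> size f = (2 * n).+1 ->
  (reciprocal n f ->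
     (is_rat_square (discriminant f) <->
      exists q : rat, (-1) ^+ n * f.[1] * f.[-1] = q ^+ 2)) /\
  (skew_reciprocal n f ->
     (is_rat_square (discriminant f) <->
      is_rat_square ((polyC_of f).['i] * (polyC_of f).[- 'i]))).
Proof.
move=> sepf szf; split => [rec | skew].
  have Hr : forall x : rat, x != 0 -> f.[x] = 1 ^+ n * x ^+ (2 * n) * f.[1 / x].
    by move=> x x0; rewrite expr1n mul1r div1r; exact: rec.
  have Hc := @coef_from_eval f n 1 (or_introl erefl) szf Hr.
  have z2 : (1 : algC) ^+ 2 = ratr 1 by rewrite rmorph1 expr1n.
  have := @main_gen f n 1 1 (or_introl erefl) z2 sepf szf Hc.
  move=> ->; rewrite -rat_sq_ratr rmorph1 /polyC_of.
  by rewrite !rmorphM rmorphXn rmorphN1 -!horner_map rmorphN1 rmorph1 mulrA.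
have sgn : (-1) ^+ (2 * n * (2 * n - 1) %/ 2) = (-1) ^+ n :> rat.
  rewrite -signr_odd.
  have -> : odd (2 * n * (2 * n - 1) %/ 2) = odd n.
    rewrite -mulnA mulKn // oddM.
    by case: (n) => //= m; rewrite mulnS subSS subn0 /= oddM /= andbT.
  by rewrite signr_odd.
have Hr : forall x : rat, x != 0 -> f.[x] = (-1) ^+ n * x ^+ (2 * n) * f.[-1 / x].
  by move=> x x0; rewrite -sgn mulNr div1r; exact: skew.
have Hc := @coef_from_eval f n (-1) (or_intror erefl) szf Hr.
have z2 : 'i ^+ 2 = ratr (-1) :> algC by rewrite sqrCi rmorphN1.
have := @main_gen f n (-1) 'i (or_intror erefl) z2 sepf szf Hc.
by rewrite rmorphN1 opprK expr1n mul1r.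
Qed.
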